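(* Let $(X,M,* )$ be a G-complete fuzzy metric space and let $(\hat{C}_0(X),\Theta_{\mathcal{M}},* )$ be the associated Hausdorff fuzzy metric space on the collection $\hat{C}_0(X)$ of nonempty compact subsets of $X$. Let $T:X\to\hat{C}_0(X)$ be a multi-valued (1)-Kannan contraction, i.e. there is a constant $c\in(0,1)$ such that for all $x,y\in X$ and all $t>0$, \[ \min\{\mathcal{M}(x,Tx,t),\mathcal{M}(y,Ty,t)\}>1-t \;\Longrightarrow\; \Theta_{\mathcal{M}}(Tx,Ty,ct)>1-ct. \] Then $T$ has a fixed point, i.e. there exists $z\in X$ with $z\in Tz$.
   Context: A continuous $t$-norm is a binary operation $*:[0,1]\times[0,1]\to[0,1]$ that is associative, commutative, continuous, satisfies $a*1=a$ for all $a\in[0,1]$, and is monotone: $a*b\le c*d$ whenever $a\le c$ and $b\le d$. A fuzzy metric space (in the sense of George–Veeramani) is a triple $(X,M,* )$ where $X$ is a nonempty set, $*$ is a continuous $t$-norm and $M:X\times X\times(0,\infty)\to[0,1]$ satisfies, for all $x,y,z\in X$ and $t,s>0$: (F1) $M(x,y,t)>0$; (F2) $M(x,y,t)=1$ for all $t>0$ iff $x=y$; (F3) $M(x,y,t)=M(y,x,t)$; (F4) $M(x,z,t+s)\ge M(x,y,t)*M(y,z,s)$; (F5) $M(x,y,\cdot):(0,\infty)\to[0,1]$ is continuous. A sequence $(x_n)$ in $X$ converges to $x\in X$ if $\lim_{n\to\infty}M(x_n,x,t)=1$ for all $t>0$; it is a G-Cauchy sequence if $\lim_{n\to\infty}M(x_n,x_{n+q},t)=1$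 for all $t>0$ and all $q\in\mathbb{N}$; $(X,M,* )$ is G-complete if every G-Cauchy sequence converges. Compactness in $X$ refers to the topology induced by $M$ (open balls $B(x,r,t)=\{y: M(x,y,t)>1-r\}$). For a nonempty $A\subseteq X$, $\rho\in X$ and $t>0$, $\mathcal{M}(\rho,A,t)=\mathcal{M}(A,\rho,t)=\sup\{M(\rho,\mu,t):\mu\in A\}$. For $A,B\in\hat{C}_0(X)$ and $t>0$, $\Theta_{\mathcal{M}}(A,B,t)=\min\{\inf_{\rho\in A}\mathcal{M}(\rho,B,t),\ \inf_{\mu\in B}\mathcal{M}(A,\mu,t)\}$; the triple $(\hat{C}_0(X),\Theta_{\mathcal{M}},* )$ is called the Hausdorff fuzzy metric space. *)

(* Defs.v *)
From Stdlib Require Import Reals List.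
From Coquelicot Require Import Rcomplements Rbar Lub.
Open Scope R_scope.

Definition unit_int (a : R) : Prop := 0 <= a <= 1.

Definition is_cont_tnorm (star : R -> R -> R) : Prop :=
  (forall a b, unit_int a -> unit_int b -> unit_int (star a b)) /\
  (forall a b c, unit_int a -> unit_int b -> unit_int c ->
     star a (star b c) = star (star a b) c) /\
  (forall a b, unit_int a -> unit_int b -> star a b = star b a) /\
  (forall a b, unit_int a -> unit_int b ->
     forall eps, eps > 0 -> exists delta, delta > 0 /\
       forall a' b', unit_int a' -> unit_int b' ->
         Rabs (a' - a) < delta -> Rabs (b' - b) < delta ->
         Rabs (star a' b' - star a b) < eps) /\
  (forall a, unit_int a -> star a 1 = a) /\
  (forall a b c d, unit_int a -> unit_int b -> unit_int c -> unit_int d ->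
     a <= c -> b <= d -> star a b <= star c d).

Definition is_fuzzy_metric {X : Type} (M : X -> X -> R -> R) (star : R -> R -> R) : Prop :=
  is_cont_tnorm star /\
  (forall x y t, t > 0 -> M x y t <= 1) /\
  (forall x y t, t > 0 -> M x y t > 0) /\
  (forall x y, (forall t, t > 0 -> M x y t = 1) <-> x = y) /\
  (forall x y t, t > 0 -> M x y t = M y x t) /\
  (forall x y z t s, t > 0 -> s > 0 -> M x z (t + s) >= star (M x y t) (M y z s)) /\
  (forall x y t, t > 0 -> continuity_pt (M x y) t).

Definition fm_converges {X : Type} (M : X -> X -> R -> R) (u : nat -> X) (x : X) : Prop :=
  forall t, t > 0 -> Un_cv (fun n => M (u n) x t) 1.

Definition G_Cauchy {X : Type} (M : X -> X -> R -> R) (u : nat -> X) : Prop :=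
  forall t, t > 0 -> forall q : nat, (q >= 1)%nat -> Un_cv (fun n => M (u n) (u (n + q)%nat) t) 1.

Definition G_complete {X : Type} (M : X -> X -> R -> R) : Prop :=
  forall u : nat -> X, G_Cauchy M u -> exists x, fm_converges M u x.

Definition fm_ball {X : Type} (M : X -> X -> R -> R) (x : X) (r t : R) : X -> Prop :=
  fun y => M x y t > 1 - r.

Definition fm_open {X : Type} (M : X -> X -> R -> R) (U : X -> Prop) : Prop :=
  forall x, U x -> exists r t, 0 < r < 1 /\ t > 0 /\ forall y, fm_ball M x r t y -> U y.

Definition fm_compact {X : Type} (M : X -> X -> R -> R) (A : X -> Prop) : Prop :=
  forall (I : Type) (U : I -> X -> Prop),
    (forall i, fm_open M (U i)) ->
    (forall a, A a -> exists i, U i a) ->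
    exists l : list I, forall a, A a -> exists i, In i l /\ U i a.

Definition in_C0 {X : Type} (M : X -> X -> R -> R) (A : X -> Prop) : Prop :=
  (exists a, A a) /\ fm_compact M A.

Definition Msup {X : Type} (M : X -> X -> R -> R) (rho : X) (A : X -> Prop) (t : R) : R :=
  real (Lub_Rbar (fun r => exists mu, A mu /\ r = M rho mu t)).

Definition Theta {X : Type} (M : X -> X -> R -> R) (A B : X -> Prop) (t : R) : R :=
  Rmin (real (Glb_Rbar (fun r => exists rho, A rho /\ r = Msup M rho B t)))
       (real (Glb_Rbar (fun r => exists mu, B mu /\ r = Msup M mu A t))).

Definition kannan1 {X : Type} (M : X -> X -> R -> R) (T : X -> X -> Prop) : Prop :=
  exists c, 0 < c < 1 /\
    forall x y t, t > 0 ->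
      Rmin (Msup M x (T x) t) (Msup M y (T y) t) > 1 - t ->
      Theta M (T x) (T y) (c * t) > 1 - c * t.

(* Main.v *)
Require Import Defs.
From Stdlib Require Import Reals Lra Lia Classical ClassicalEpsilon List.
From Coquelicot Require Import Rcomplements Rbar Lub.
Open Scope R_scope.

Lemma Msup_ge {X} (M : X -> X -> R -> R) rho (A : X -> Prop) t a :
  (forall y, M rho y t <= 1) -> A a -> M rho a t <= Msup M rho A t.
Proof.
  intros Hb Ha. unfold Msup.
  set (E := fun r => exists mu, A mu /\ r = M rho mu t).
  destruct (Lub_Rbar_correct E) as [Hub Hl].
  assert (H1 : Rbar_le (Lub_Rbar E) 1). { apply Hl. intros x [mu [_ ->]]. simpl. apply Hb. }
  assert (H2 : Rbar_le (M rho a t) (Lub_Rbar E)). { apply Hub. exists a; split; auto. }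
  destruct (Lub_Rbar E); simpl in *; try contradiction; lra.
Qed.

Lemma Msup_witness {X} (M : X -> X -> R -> R) rho (A : X -> Prop) t a r :
  (forall y, M rho y t <= 1) -> A a -> Msup M rho A t > r -> exists b, A b /\ M rho b t > r.
Proof.
  intros Hb Ha Hs. apply NNPP; intro Hn.
  assert (Hall : forall b, A b -> M rho b t <= r).
  { intros b Hb'. apply Rnot_lt_le. intro Hc. apply Hn. exists b; split; auto. }
  unfold Msup in Hs.
  set (E := fun r => exists mu, A mu /\ r = M rho mu t) in Hs.
  destruct (Lub_Rbar_correct E) as [Hub Hl].
  assert (H1 : Rbar_le (Lub_Rbar E) r). { apply Hl. intros x [mu [Hm ->]]. simpl. apply Hall; auto. }
  assert (H2 : Rbar_le (M rho a t) (Lub_Rbar E)). { apply Hub. exists a; split; auto. }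
  destruct (Lub_Rbar E); simpl in *; try contradiction; lra.
Qed.

Lemma Glb_le (E : R -> Prop) e : (forall x, E x -> 0 <= x) -> E e -> real (Glb_Rbar E) <= e.
Proof.
  intros H0 He.
  destruct (Glb_Rbar_correct E) as [Hlb Hg].
  assert (H1 : Rbar_le 0 (Glb_Rbar E)). { apply Hg. intros x Hx. simpl. apply H0; auto. }
  assert (H2 : Rbar_le (Glb_Rbar E) e). { apply Hlb. auto. }
  destruct (Glb_Rbar E); simpl in *; try contradiction; lra.
Qed.

Ltac fmd H := destruct H as [[Hs01 [Hassoc [Hcomm [Hcont [Hunit Hmn]]]]] [Hle1 [Hpos [Heq [Hsym [Htri Hcontt]]]]]].

Lemma M_refl {X} (M : X -> X -> R -> R) star x t : is_fuzzy_metric M star -> t > 0 -> M x x t = 1.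
Proof. intros Hf Ht. fmd Hf. apply (proj2 (Heq x x)); auto. Qed.

Lemma M_unit {X} (M : X -> X -> R -> R) star x y t : is_fuzzy_metric M star -> t > 0 -> unit_int (M x y t).
Proof. intros Hf Ht. fmd Hf. split; [left; apply Hpos|apply Hle1]; auto. Qed.

Lemma M_mono {X} (M : X -> X -> R -> R) star x y t s :
  is_fuzzy_metric M star -> t > 0 -> t <= s -> M x y t <= M x y s.
Proof.
  intros Hf Ht Hts. destruct (Req_dec t s) as [<-|Hne]; [lra|].
  pose proof (M_refl M star x (s - t) Hf ltac:(lra)) as Hr.
  pose proof (M_unit M star x y t Hf Ht) as Hu.
  fmd Hf.
  replace s with ((s - t) + t) by ring.
  pose proof (Htri x x y (s - t) t ltac:(lra) Ht) as H.
  rewrite Hr in H. rewrite Hcomm in H; [|split; lra|auto]. rewrite Hunit in H; auto. lra.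
Qed.

Definition Pp {X} (M : X -> X -> R -> R) (T : X -> X -> Prop) x t := exists y, T x y /\ M x y t > 1 - t.

Lemma Pp_mono {X} (M : X -> X -> R -> R) star (T : X -> X -> Prop) x t s :
  is_fuzzy_metric M star -> Pp M T x t -> t > 0 -> t <= s -> Pp M T x s.
Proof.
  intros Hf [y [Hy Hm]] Ht Hts. exists y; split; auto.
  pose proof (M_mono M star x y t s Hf Ht Hts). lra.
Qed.

Lemma Pp_big {X} (M : X -> X -> R -> R) star (T : X -> X -> Prop) x t :
  is_fuzzy_metric M star -> (forall x, in_C0 M (T x)) -> t >= 1 -> Pp M T x t.
Proof.
  intros Hf HC Ht. destruct (HC x) as [[y Hy] _]. exists y; split; auto.
  fmd Hf. pose proof (Hpos x y t ltac:(lra)). lra.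
Qed.

Lemma Msup_pos {X} (M : X -> X -> R -> R) star (T : X -> X -> Prop) x y t :
  is_fuzzy_metric M star -> (forall x, in_C0 M (T x)) -> t > 0 -> 0 <= Msup M y (T x) t.
Proof.
  intros Hf HC Ht. destruct (HC x) as [[a Ha] _].
  pose proof (Msup_ge M y (T x) t a (fun w => proj2 (M_unit M star y w t Hf Ht)) Ha).
  pose proof (proj1 (M_unit M star y a t Hf Ht)). lra.
Qed.

Lemma kstep {X} (M : X -> X -> R -> R) star (T : X -> X -> Prop) c x y y' s :
  is_fuzzy_metric M star -> (forall x, in_C0 M (T x)) -> 0 < c < 1 ->
  (forall x y t, t > 0 ->
      Rmin (Msup M x (T x) t) (Msup M y (T y) t) > 1 - t ->
      Theta M (T x) (T y) (c * t) > 1 - c * t) ->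
  s > 0 -> Pp M T x s -> Pp M T y s -> T x y' ->
  exists w, T y w /\ M y' w (c * s) > 1 - c * s.
Proof.
  intros Hf HC Hc Hk Hs [a [Ha Hma]] [b [Hb Hmb]] Hy'.
  assert (H1 : Msup M x (T x) s > 1 - s).
  { pose proof (Msup_ge M x (T x) s a (fun w => proj2 (M_unit M star x w s Hf Hs)) Ha). lra. }
  assert (H2 : Msup M y (T y) s > 1 - s).
  { pose proof (Msup_ge M y (T y) s b (fun w => proj2 (M_unit M star y w s Hf Hs)) Hb). lra. }
  pose proof (Hk x y s Hs (Rmin_glb_lt _ _ _ H1 H2)) as HT.
  unfold Theta in HT.
  assert (Hcs : c * s > 0) by nra.
  pose proof (Rmin_l (real (Glb_Rbar (fun r => exists rho, T x rho /\ r = Msup M rho (T y) (c * s))))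
                     (real (Glb_Rbar (fun r => exists mu, T y mu /\ r = Msup M mu (T x) (c * s))))) as Hm.
  assert (Hg : real (Glb_Rbar (fun r => exists rho, T x rho /\ r = Msup M rho (T y) (c * s))) <= Msup M y' (T y) (c * s)).
  { apply Glb_le. intros r [rho [_ ->]]. eapply Msup_pos; eauto. exists y'; split; auto. }
  destruct (HC y) as [[e He] _].
  apply (Msup_witness M y' (T y) (c * s) e); auto.
  intro w; apply (M_unit M star y' w _ Hf Hcs). lra.
Qed.

Lemma Pp_succ {X} (M : X -> X -> R -> R) star (T : X -> X -> Prop) c x y t :
  is_fuzzy_metric M star -> (forall x, in_C0 M (T x)) -> 0 < c < 1 ->
  (forall x y t, t > 0 ->
      Rmin (Msup M x (T x) t) (Msup M y (T y) t) > 1 - t ->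
      Theta M (T x) (T y) (c * t) > 1 - c * t) ->
  T x y -> Pp M T x t -> t > 0 -> Pp M T y (c * t).
Proof.
  intros Hf HC Hc Hk Hxy Hp Ht.
  assert (Q : forall k s, s >= t -> s >= c ^ k -> Pp M T y s).
  { induction k; intros s Hs1 Hs2.
    - simpl in Hs2. eapply Pp_big; eauto.
    - simpl in Hs2.
      assert (Hs0 : s > 0) by lra.
      assert (E : c * (s / c) = s) by (field; lra).
      assert (H1 : s / c >= s).
      { apply Rle_ge. apply (Rmult_le_reg_l c); [lra|]. rewrite E. nra. }
      assert (H2 : s / c >= c ^ k).
      { apply Rle_ge. apply (Rmult_le_reg_l c); [lra|]. rewrite E. lra. }
      pose proof (IHk (s / c) ltac:(lra) H2) as Py.
      pose proof (Pp_mono M star T x t (s / c) Hf Hp Ht ltac:(lra)) as Px.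
      destruct (kstep M star T c x y y (s / c) Hf HC Hc Hk ltac:(lra) Px Py Hxy) as [w [Hw Hm]].
      rewrite E in Hm. exists w; split; auto. }
  destruct (pow_lt_1_zero c ltac:(rewrite Rabs_pos_eq; lra) t Ht) as [N HN].
  specialize (HN N (le_n N)).
  assert (Hpow : 0 < c ^ N) by (apply pow_lt; lra).
  rewrite Rabs_pos_eq in HN by lra.
  pose proof (Q N t ltac:(lra) ltac:(lra)) as Py.
  destruct (kstep M star T c x y y t Hf HC Hc Hk Ht Hp Py Hxy) as [w [Hw Hm]].
  exists w; split; auto.
Qed.

Fixpoint xs {X} (inh : inhabited X) (M : X -> X -> R -> R) (T : X -> X -> Prop) (c : R) (x0 : X) (n : nat) : X :=
  match n with
  | O => x0
  | S k => epsilon inh (fun y => T (xs inh M T c x0 k) y /\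
             M (xs inh M T c x0 k) y (c ^ k) > 1 - c ^ k)
  end.

Lemma xs_prop {X} (inh : inhabited X) (M : X -> X -> R -> R) star (T : X -> X -> Prop) c x0 :
  is_fuzzy_metric M star -> (forall x, in_C0 M (T x)) -> 0 < c < 1 ->
  (forall x y t, t > 0 ->
      Rmin (Msup M x (T x) t) (Msup M y (T y) t) > 1 - t ->
      Theta M (T x) (T y) (c * t) > 1 - c * t) ->
  forall n, Pp M T (xs inh M T c x0 n) (c ^ n) /\
    T (xs inh M T c x0 n) (xs inh M T c x0 (S n)) /\
    M (xs inh M T c x0 n) (xs inh M T c x0 (S n)) (c ^ n) > 1 - c ^ n.
Proof.
  intros Hf HC Hc Hk.
  assert (A : forall n, Pp M T (xs inh M T c x0 n) (c ^ n) -> 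
    T (xs inh M T c x0 n) (xs inh M T c x0 (S n)) /\
    M (xs inh M T c x0 n) (xs inh M T c x0 (S n)) (c ^ n) > 1 - c ^ n).
  { intros n Hp. simpl. apply (epsilon_spec inh (fun y => T (xs inh M T c x0 n) y /\
             M (xs inh M T c x0 n) y (c ^ n) > 1 - c ^ n)). exact Hp. }
  assert (B : forall n, Pp M T (xs inh M T c x0 n) (c ^ n)).
  { induction n.
    - simpl. eapply Pp_big; eauto. lra.
    - destruct (A n IHn) as [H1 _].
      change (c ^ S n) with (c * c ^ n).
      eapply Pp_succ; eauto. apply pow_lt; lra. }
  intro n. split; auto.
Qed.

Lemma Un_cv_ext u v l : (forall n, u n = v n) -> Un_cv u l -> Un_cv v l.
Proof. intros H Hu e He. destruct (Hu e He) as [N HN]. exists N. intros n Hn. rewrite <- H. auto. Qed.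

Lemma Un_cv_shift u l k : Un_cv u l -> Un_cv (fun n => u (n + k)%nat) l.
Proof. intros Hu e He. destruct (Hu e He) as [N HN]. exists N. intros n Hn. apply HN. lia. Qed.

Lemma squeeze1 (lo u : nat -> R) : (forall n, lo n <= u n <= 1) -> Un_cv lo 1 -> Un_cv u 1.
Proof.
  intros H Hl e He. destruct (Hl e He) as [N HN]. exists N. intros n Hn.
  specialize (HN n Hn). specialize (H n). unfold R_dist in *.
  rewrite Rabs_left1 in HN by lra. rewrite Rabs_left1 by lra. lra.
Qed.

Lemma star_cv star (a b : nat -> R) : is_cont_tnorm star ->
  (forall n, unit_int (a n)) -> (forall n, unit_int (b n)) ->
  Un_cv a 1 -> Un_cv b 1 -> Un_cv (fun n => star (a n) (b n)) 1.
Proof.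
  intros [Hs01 [Hassoc [Hcomm [Hcont [Hunit Hmn]]]]] Ha Hb Hca Hcb e He.
  assert (U1 : unit_int 1) by (split; lra).
  destruct (Hcont 1 1 U1 U1 e He) as [d [Hd Hdd]].
  destruct (Hca d Hd) as [N1 HN1]. destruct (Hcb d Hd) as [N2 HN2].
  exists (N1 + N2)%nat. intros n Hn. unfold R_dist.
  rewrite <- (Hunit 1 U1) at 1. apply Hdd; auto.
  apply HN1; lia. apply HN2; lia.
Qed.

Lemma consec_cv {X} (M : X -> X -> R -> R) star (x : nat -> X) c :
  is_fuzzy_metric M star -> 0 < c < 1 ->
  (forall n, M (x n) (x (S n)) (c ^ n) > 1 - c ^ n) ->
  forall t, t > 0 -> Un_cv (fun n => M (x n) (x (S n)) t) 1.
Proof.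
  intros Hf Hc Hx t Ht e He.
  destruct (pow_lt_1_zero c ltac:(rewrite Rabs_pos_eq; lra) (Rmin t e) ltac:(apply Rmin_glb_lt; lra)) as [N HN].
  exists N. intros n Hn. specialize (HN n Hn).
  assert (Hpow : 0 < c ^ n) by (apply pow_lt; lra).
  rewrite Rabs_pos_eq in HN by lra.
  pose proof (Rmin_l t e). pose proof (Rmin_r t e).
  pose proof (M_mono M star (x n) (x (S n)) (c ^ n) t Hf Hpow ltac:(lra)).
  pose proof (M_unit M star (x n) (x (S n)) t Hf Ht) as [_ Hle].
  specialize (Hx n). unfold R_dist. rewrite Rabs_left1 by lra. lra.
Qed.

Lemma gcauchy {X} (M : X -> X -> R -> R) star (x : nat -> X) c :
  is_fuzzy_metric M star -> 0 < c < 1 ->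
  (forall n, M (x n) (x (S n)) (c ^ n) > 1 - c ^ n) ->
  G_Cauchy M x.
Proof.
  intros Hf Hc Hx.
  pose proof (consec_cv M star x c Hf Hc Hx) as Hcc.
  assert (G : forall q t, t > 0 -> Un_cv (fun n => M (x n) (x (n + S q)%nat) t) 1).
  { induction q; intros t Ht.
    - apply (Un_cv_ext (fun n => M (x n) (x (S n)) t)); auto.
      intro n. replace (n + 1)%nat with (S n) by lia. reflexivity.
    - apply (squeeze1 (fun n => star (M (x n) (x (n + S q)%nat) (t/2)) (M (x (n + S q)%nat) (x (S (n + S q))) (t/2)))).
      + intro n. split.
        * destruct Hf as [_ [_ [_ [_ [_ [Htri _]]]]]].
          replace (n + S (S q))%nat with (S (n + S q)) by lia.
          replace t with (t/2 + t/2) at 3 by field. apply Rge_le, Htri; lra.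
        * apply (M_unit M star); auto.
      + apply star_cv. apply Hf.
        * intro n; apply (M_unit M star); auto; lra.
        * intro n; apply (M_unit M star); auto; lra.
        * apply IHq; lra.
        * apply (Un_cv_shift (fun n => M (x n) (x (S n)) (t/2)) 1 (S q)). apply Hcc; lra. }
  intros t Ht q Hq. destruct q as [|q]; [lia|]. apply G; auto.
Qed.

Lemma stepA {X} (M : X -> X -> R -> R) star (T : X -> X -> Prop) c (x : nat -> X) z u eps :
  is_fuzzy_metric M star -> (forall x, in_C0 M (T x)) -> 0 < c < 1 ->
  (forall x y t, t > 0 ->
      Rmin (Msup M x (T x) t) (Msup M y (T y) t) > 1 - t ->
      Theta M (T x) (T y) (c * t) > 1 - c * t) ->
  (forall n, Pp M T (x n) (c ^ n) /\ T (x n) (x (S n))) ->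
  fm_converges M x z ->
  Pp M T z u -> u > 0 -> eps > 0 -> Pp M T z (c * u + eps).
Proof.
  intros Hf HC Hc Hk Hx Hz Hp Hu He.
  destruct (Rle_lt_dec 1 (c * u + eps)) as [Hbig|Hsm].
  { eapply Pp_big; eauto; lra. }
  set (b0 := 1 - c * u).
  assert (Hcu : c * u > 0) by nra.
  assert (Ub0 : unit_int b0) by (unfold b0; split; lra).
  assert (U1 : unit_int 1) by (split; lra).
  pose proof Hf as Hf'. fmd Hf'.
  destruct (Hcont 1 b0 U1 Ub0 eps He) as [d [Hd Hdd]].
  destruct (Hz eps He d Hd) as [N1 HN1].
  destruct (pow_lt_1_zero c ltac:(rewrite Rabs_pos_eq; lra) u Hu) as [N2 HN2].
  set (n := (N1 + N2)%nat).
  specialize (HN1 (S n) ltac:(unfold n; lia)). specialize (HN2 n ltac:(unfold n; lia)).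
  assert (Hpow : 0 < c ^ n) by (apply pow_lt; lra).
  rewrite Rabs_pos_eq in HN2 by lra.
  destruct (Hx n) as [Pn Tn].
  pose proof (Pp_mono M star T (x n) (c ^ n) u Hf Pn Hpow ltac:(lra)) as Pn'.
  destruct (kstep M star T c (x n) z (x (S n)) u Hf HC Hc Hk Hu Pn' Hp Tn) as [w [Hw Hm]].
  exists w; split; auto.
  set (a := M (x (S n)) z eps) in *.
  assert (Ua : unit_int a) by (apply (M_unit M star); auto).
  assert (Uw : unit_int (M (x (S n)) w (c * u))) by (apply (M_unit M star); auto).
  pose proof (Htri z (x (S n)) w eps (c * u) He Hcu) as Ht.
  rewrite (Hsym z (x (S n)) eps He) in Ht. fold a in Ht.
  pose proof (Hmn a b0 a (M (x (S n)) w (c * u)) Ua Ub0 Ua Uw (Rle_refl a) ltac:(unfold b0; lra)) as Hmono.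
  unfold R_dist in HN1. fold a in HN1.
  pose proof (Hdd a b0 Ua Ub0 HN1 ltac:(rewrite Rminus_diag, Rabs_R0; lra)) as Hcl.
  rewrite (Hcomm 1 b0 U1 Ub0), (Hunit b0 Ub0) in Hcl.
  apply Rabs_def2 in Hcl. replace (c * u + eps) with (eps + c * u) by ring.
  unfold b0 in *. lra.
Qed.

Lemma Pp_all {X} (M : X -> X -> R -> R) star (T : X -> X -> Prop) c (x : nat -> X) z :
  is_fuzzy_metric M star -> (forall x, in_C0 M (T x)) -> 0 < c < 1 ->
  (forall x y t, t > 0 ->
      Rmin (Msup M x (T x) t) (Msup M y (T y) t) > 1 - t ->
      Theta M (T x) (T y) (c * t) > 1 - c * t) ->
  (forall n, Pp M T (x n) (c ^ n) /\ T (x n) (x (S n))) ->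
  fm_converges M x z ->
  forall s, s > 0 -> Pp M T z s.
Proof.
  intros Hf HC Hc Hk Hx Hz s Hs.
  assert (Q : forall k, Pp M T z (c ^ k + s / 2)).
  { induction k.
    - simpl. eapply Pp_big; eauto; lra.
    - assert (Hpow : 0 < c ^ k) by (apply pow_lt; lra).
      pose proof (stepA M star T c x z (c ^ k + s / 2) ((1 - c) * s / 2) Hf HC Hc Hk Hx Hz IHk
        ltac:(lra) ltac:(apply Rmult_lt_0_compat; [|lra]; apply Rmult_lt_0_compat; lra)) as H.
      replace (c ^ S k + s / 2) with (c * (c ^ k + s / 2) + (1 - c) * s / 2) by (simpl; field).
      exact H. }
  destruct (pow_lt_1_zero c ltac:(rewrite Rabs_pos_eq; lra) (s / 2) ltac:(lra)) as [N HN].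
  specialize (HN N (le_n N)).
  assert (Hpow : 0 < c ^ N) by (apply pow_lt; lra).
  rewrite Rabs_pos_eq in HN by lra.
  apply (Pp_mono M star T z (c ^ N + s / 2)); auto; lra.
Qed.

Lemma U_open {X} (M : X -> X -> R -> R) star z (p : R * R) :
  is_fuzzy_metric M star ->
  fm_open M (fun y => 0 < fst p /\ snd p < 1 /\ M z y (fst p) < snd p).
Proof.
  intros Hf y [Ht [Ha Hm]]. destruct p as [t al]; simpl in *.
  pose proof Hf as Hf'. fmd Hf'.
  pose proof (Hcontt z y t Ht) as Hc.
  unfold continuity_pt, continue_in, limit1_in, limit_in in Hc. simpl in Hc.
  destruct (Hc ((al - M z y t) / 2) ltac:(lra)) as [d [Hd Hdd]].
  set (s := d / 2).
  assert (Hs : s > 0) by (unfold s; lra).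
  specialize (Hdd (t + s)). unfold R_dist, D_x, no_cond in Hdd.
  assert (Hm' : M z y (t + s) < al).
  { assert (H : Rabs (M z y (t + s) - M z y t) < (al - M z y t) / 2).
    { apply Hdd. split; [split; [exact I|lra]|]. replace (t + s - t) with s by ring.
      rewrite Rabs_pos_eq; unfold s; lra. }
    apply Rabs_def2 in H. lra. }
  pose proof (Hpos z y t Ht).
  assert (Ual : unit_int al) by (split; lra).
  assert (U1 : unit_int 1) by (split; lra).
  destruct (Hcont al 1 Ual U1 (al - M z y (t + s)) ltac:(lra)) as [d' [Hd' Hdd']].
  set (r := Rmin (d' / 2) (1 / 2)).
  assert (Hr1 : r <= d' / 2) by apply Rmin_l.
  assert (Hr2 : r <= 1 / 2) by apply Rmin_r.
  assert (Hr0 : r > 0) by (apply Rmin_glb_lt; lra).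
  exists r, s. split; [lra|]. split; [exact Hs|].
  intros v Hv. unfold fm_ball in Hv. split; [exact Ht|]. split; [exact Ha|].
  apply Rnot_le_lt. intro Hge.
  pose proof (Htri z v y t s Ht Hs) as Htr.
  rewrite (Hsym v y s Hs) in Htr.
  assert (Ur : unit_int (1 - r)) by (split; lra).
  assert (Uv : unit_int (M z v t)) by (apply (M_unit M star); auto).
  assert (Uy : unit_int (M y v s)) by (apply (M_unit M star); auto).
  pose proof (Hmn al (1 - r) (M z v t) (M y v s) Ual Ur Uv Uy Hge ltac:(lra)) as Hmo.
  pose proof (Hdd' al (1 - r) Ual Ur ltac:(rewrite Rminus_diag, Rabs_R0; lra)
     ltac:(replace (1 - r - 1) with (- r) by ring; rewrite Rabs_Ropp, Rabs_pos_eq; lra)) as Hcl.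
  rewrite (Hunit al Ual) in Hcl. apply Rabs_def2 in Hcl. lra.
Qed.

Lemma list_min (l : list (R * R)) :
  exists s, 0 < s /\ forall i, In i l -> 0 < fst i -> snd i < 1 -> s <= fst i /\ snd i <= 1 - s.
Proof.
  induction l as [|i l [s [Hs H]]].
  - exists 1. split; [lra|]. intros i [].
  - destruct (classic (0 < fst i /\ snd i < 1)) as [[H1 H2]|Hn].
    + exists (Rmin s (Rmin (fst i) (1 - snd i))).
      pose proof (Rmin_l s (Rmin (fst i) (1 - snd i))).
      pose proof (Rmin_r s (Rmin (fst i) (1 - snd i))).
      pose proof (Rmin_l (fst i) (1 - snd i)). pose proof (Rmin_r (fst i) (1 - snd i)).
      split. { apply Rmin_glb_lt; [lra|]. apply Rmin_glb_lt; lra. }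
      intros j [<-|Hj] Hj1 Hj2; [lra|]. destruct (H j Hj Hj1 Hj2). lra.
    + exists s. split; [lra|]. intros j [<-|Hj] Hj1 Hj2; [tauto|]. auto.
Qed.

Lemma closed_fix {X} (M : X -> X -> R -> R) star (T : X -> X -> Prop) z :
  is_fuzzy_metric M star -> in_C0 M (T z) ->
  (forall s, s > 0 -> Pp M T z s) -> T z z.
Proof.
  intros Hf [_ Hcomp] HP. apply NNPP. intro Hn.
  destruct (Hcomp (R * R)%type (fun p y => 0 < fst p /\ snd p < 1 /\ M z y (fst p) < snd p))
    as [l Hl].
  - intro p. apply (U_open M star); auto.
  - intros a Ha.
    assert (Hne : ~ (forall t, t > 0 -> M z a t = 1)).
    { intro H. pose proof Hf as Hf'. fmd Hf'. apply (proj1 (Heq z a)) in H. subst. auto. }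
    apply not_all_ex_not in Hne. destruct Hne as [t Ht].
    apply imply_to_and in Ht. destruct Ht as [Ht Hm].
    pose proof (M_unit M star z a t Hf Ht) as [_ Hle].
    exists (t, (M z a t + 1) / 2). simpl. split; [lra|]. destruct Hle; lra.
  - destruct (list_min l) as [s [Hs Hmin]].
    destruct (HP s Hs) as [w [Hw Hmw]].
    destruct (Hl w Hw) as [[t al] [Hi [Ht [Ha Hm]]]]. simpl in *.
    destruct (Hmin (t, al) Hi Ht Ha) as [H1 H2]. simpl in *.
    pose proof (M_mono M star z w s t Hf Hs H1). lra.
Qed.

Theorem mainTheorem1 (X : Type) (M : X -> X -> R -> R) (star : R -> R -> R)
  (T : X -> X -> Prop) :
  inhabited X ->
  is_fuzzy_metric M star ->
  G_complete M ->
  (forall x, in_C0 M (T x)) ->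
  kannan1 M T ->
  exists z, T z z.
Proof.
  intros inh Hf HG HC [c [Hc Hk]].
  destruct inh as [x0] eqn:Einh.
  pose proof (xs_prop inh M star T c x0 Hf HC Hc Hk) as Hx.
  set (x := xs inh M T c x0) in *.
  destruct (HG x) as [z Hz].
  { apply (gcauchy M star x c Hf Hc). intro n. apply (Hx n). }
  exists z. apply (closed_fix M star T z Hf (HC z)).
  apply (Pp_all M star T c x z Hf HC Hc Hk); auto.
  intro n. destruct (Hx n) as [H1 [H2 _]]. auto.
Qed.
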